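(* Let $q$ be a power of a prime $p$, let $k$ be an algebraically closed field of characteristic $p$, $G=\mathrm{GL}_n(k)$, $\mathfrak{g}=\mathfrak{gl}_n(k)$. Let $F:G\to G$ be $F((g_{i,j}))=\big((g^q_{n+1-j,\,n+1-i})\big)^{-1}$ and $F:\mathfrak{g}\to\mathfrak{g}$ be $F((x_{i,j}))=(x^q_{n+1-j,\,n+1-i})$. Fix $\alpha\in\mathbb{F}_{q^2}\setminus\mathbb{F}_q$ and define $s^{-1}:\mathfrak{g}_{\mathrm{nil}}\to G_{\mathrm{uni}}$ by $s^{-1}(x)=(1+\alpha^q x)^{-1}(\alpha x+1)$. If $x\in\mathfrak{g}_{\mathrm{nil}}$ satisfies $F(x)=x$, then $s^{-1}(x)\in G^F=\{g\in G: F(g)=g\}$.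
   Context: $G_{\mathrm{uni}}$ is the set of unipotent elements of $G$ and $\mathfrak{g}_{\mathrm{nil}}$ the set of nilpotent elements of $\mathfrak{g}$; $G^F$ is the finite unitary group $\mathrm{GU}_n(\mathbb{F}_q)$ defined by this $F$. *)

(* Defs.v *)
From HB Require Import structures.
From mathcomp Require Import all_boot all_order all_algebra all_field.
Set Implicit Arguments. Unset Strict Implicit. Unset Printing Implicit Defensive.
Import GRing.Theory.
Local Open Scope ring_scope.

(* Frobenius-twisted anti-transpose on gl_n(k):
   F((x_{i,j})) = (x_{n+1-j, n+1-i}^q)  (0-indexed: rev_ord i = n-1-i) *)
Definition Flie (k : fieldType) (n q : nat) (x : 'M[k]_n) : 'M[k]_n :=
  \matrix_(i, j) (x (rev_ord j) (rev_ord i)) ^+ q.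

Definition Fgrp (k : fieldType) (n q : nat) (g : 'M[k]_n) : 'M[k]_n :=
  invmx (Flie q g).

Definition mx_nilpotent (k : fieldType) (n : nat) (x : 'M[k]_n) : Prop :=
  exists m : nat, iter m (mulmx x) 1%:M = 0.

Definition s_inv (k : fieldType) (n q : nat) (alpha : k) (x : 'M[k]_n) : 'M[k]_n :=
  invmx (1%:M + (alpha ^+ q) *: x) *m (alpha *: x + 1%:M).

Definition in_GF (k : fieldType) (n q : nat) (g : 'M[k]_n) : Prop :=
  g \in unitmx /\ Fgrp q g = g.

(* Main.v *)
Require Import Defs.
From HB Require Import structures.
From mathcomp Require Import all_boot all_order all_algebra all_field.
Local Open Scope ring_scope.
Import GRing.Theory.

Section Aux.
Variable k : fieldType.
Variable q : nat.
Hypothesis q_gt0 : (0 < q)%N.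
Hypothesis hq : forall u v : k, (u + v) ^+ q = u ^+ q + v ^+ q.

Lemma frob0 : (0 : k) ^+ q = 0.
Proof. by rewrite expr0n; case: q q_gt0. Qed.

Lemma frob_sum (I : Type) (r : seq I) (P : pred I) (F : I -> k) :
  (\sum_(i <- r | P i) F i) ^+ q = \sum_(i <- r | P i) F i ^+ q.
Proof. exact: (big_morph (fun u : k => u ^+ q) hq frob0). Qed.

Lemma FlieD n (A B : 'M[k]_n) : Flie q (A + B) = Flie q A + Flie q B.
Proof. by apply/matrixP => i j; rewrite !mxE hq. Qed.

Lemma FlieZ n c (A : 'M[k]_n) : Flie q (c *: A) = c ^+ q *: Flie q A.
Proof. by apply/matrixP => i j; rewrite !mxE exprMn. Qed.

Lemma Flie1 n : Flie q (1%:M : 'M[k]_n) = 1%:M.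
Proof.
apply/matrixP => i j; rewrite !mxE (inj_eq rev_ord_inj) eq_sym.
by case: (i == j); rewrite ?expr1n ?frob0.
Qed.

Lemma FlieM n (A B : 'M[k]_n) : Flie q (A *m B) = Flie q B *m Flie q A.
Proof.
apply/matrixP => i j; rewrite !mxE frob_sum.
rewrite [RHS](reindex_inj rev_ord_inj) /=.
apply: eq_bigr => l _; rewrite !mxE rev_ordK exprMn mulrC.
done.
Qed.

Lemma FlieV n (A : 'M[k]_n.+1) : A \is a GRing.unit ->
  Flie q (A^-1) = (Flie q A)^-1.
Proof.
move=> uA.
have h : Flie q A * Flie q (A^-1) = 1.
  by rewrite -mulmxE -FlieM mulmxE mulVr //; exact: Flie1.
have uF : Flie q A \is a GRing.unit.
  by case: (mulmx1_unit h).
by rewrite -[LHS]mul1r -(mulVr uF) -mulrA h mulr1.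
Qed.

Lemma unit_lin n (x : 'M[k]_n.+1) m c : x ^+ m = 0 -> 1 + c *: x \is a GRing.unit.
Proof.
move=> xm.
have := subrX1 (- (c *: x)) m.
rewrite exprNn exprZn xm scaler0 mulr0 sub0r => h.
have h2 : (1 + c *: x) * (\sum_(i < m) (- (c *: x)) ^+ i) = 1.
  have -> : 1 + c *: x = - (- (c *: x) - 1) by rewrite opprB opprK addrC.
  by rewrite mulNr -h opprK.
by case: (mulmx1_unit h2).
Qed.

Lemma commZ n (x : 'M[k]_n.+1) c d : GRing.comm (c *: x) (d *: x).
Proof. by rewrite /GRing.comm -!scalerAl -!scalerAr scalerA mulrC -scalerA. Qed.
End Aux.

Theorem mainTheorem3 (k : closedFieldType) (p e : nat) (n : nat) (alpha : k)
  (x : 'M[k]_n) :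
  prime p -> (p \in [pchar k])%N -> (0 < e)%N ->
  let q := (p ^ e)%N in
  alpha ^+ (q ^ 2) = alpha -> alpha ^+ q != alpha ->
  mx_nilpotent x -> Flie q x = x ->
  in_GF q (s_inv q alpha x).
Proof.
move=> pp pch e0 q aq _ [m xm] Fx.
have q0 : (0 < q)%N by rewrite /q expn_gt0 prime_gt0.
have hq : forall u v : k, (u + v) ^+ q = u ^+ q + v ^+ q.
  move=> u v; apply: exprDn_pchar.
  by rewrite /q pnatX (pnatE _ pp) pch.
case: n x xm Fx => [|n] x xm Fx.
  split; first by rewrite unitmxE det_mx00 unitr1.
  by rewrite [LHS]flatmx0 [RHS]flatmx0.
have xm' : x ^+ m = 0.
  rewrite -xm; elim: m {xm} => [|m IH] //=.
  by rewrite exprS IH.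
set A := 1 + alpha ^+ q *: x.
set B := 1 + alpha *: x.
have uA : A \is a GRing.unit by apply: unit_lin xm'.
have uB : B \is a GRing.unit by apply: unit_lin xm'.
have cAB : GRing.comm A B.
  rewrite /A /B; apply: commrD; first exact: commr1.
  apply/commr_sym/commrD; last exact: commZ.
  exact: commr1.
have -> : s_inv q alpha x = A^-1 * B.
  by rewrite /s_inv [alpha *: x + _]addrC.
split; first by rewrite -[_ \in unitmx]/(_ \is a GRing.unit) unitrMr // unitrV.
rewrite /Fgrp -[invmx _]/((Flie q (A^-1 * B))^-1).
rewrite -[A^-1 * B]/(A^-1 *m B) FlieM // FlieV // FlieD // FlieD // !FlieZ // Fx Flie1 //.
rewrite -exprM mulnn aq.
change ((A * B^-1)^-1 = A^-1 * B).
rewrite invrM ?unitrV // invrK.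
by have := commrV (commr_sym cAB).
Qed.
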